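(* Let $G=(V,E)$ be the bipartite graph with $V=\{v_1,\dots,v_{10}\}$ and the 14 edges $\{v_1,v_6\},\{v_1,v_7\},\{v_2,v_6\},\{v_2,v_7\},\{v_2,v_8\},\{v_3,v_7\},\{v_3,v_9\},\{v_3,v_{10}\},\{v_4,v_8\},\{v_4,v_9\},\{v_4,v_{10}\},\{v_5,v_8\},\{v_5,v_9\},\{v_5,v_{10}\}$, and let $R=\{\{v_2,v_7\},\{v_4,v_9\},\{v_5,v_{10}\}\}$. Let $y\in\mathbb{R}^E$ be given by $y_{\{v_1,v_6\}}=\frac23$ and $y_e=\frac13$ for all other $e\in E$. Then $y$ is not a convex combination of incidence vectors of perfect matchings $M$ of $G$ with $|M\cap R|$ odd, i.e., $y\notin P_{(G,R)}$.
   Context: $P_{(G,R)}=\operatorname{conv}\{\chi^M\colon M \text{ a perfect matching of } G,\ |M\cap R| \text{ odd}\}$. *)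

(* Defs.v *)
From HB Require Import structures.
From mathcomp Require Import all_boot all_order all_algebra.
Set Implicit Arguments. Unset Strict Implicit. Unset Printing Implicit Defensive.
Import Order.TTheory GRing.Theory Num.Theory.
Local Open Scope ring_scope.

(* Vertices v_1..v_10 are represented by i : 'I_10 with label i.+1.
   Edges are indexed by 'I_14, in the order listed in the paper; each edge is
   given by the (1-based) labels of its two endpoints. *)
Definition edge_list : seq (nat * nat) :=
  [:: (1,6); (1,7); (2,6); (2,7); (2,8); (3,7); (3,9); (3,10);
      (4,8); (4,9); (4,10); (5,8); (5,9); (5,10)]%N.

Definition ends (e : 'I_14) : nat * nat := nth (0,0)%N edge_list e.

Definition incident (v : 'I_10) (e : 'I_14) : bool :=
  (v.+1 == (ends e).1) || (v.+1 == (ends e).2).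

Definition perfect_matching (M : {set 'I_14}) : bool :=
  [forall v : 'I_10, #|[set e in M | incident v e]| == 1%N].

Definition Rset : {set 'I_14} :=
  [set e : 'I_14 | ends e \in [:: (2,7); (4,9); (5,10)]%N].

Definition odd_pm (M : {set 'I_14}) : bool :=
  perfect_matching M && odd #|M :&: Rset|.

Definition chi (R : pzRingType) (M : {set 'I_14}) : 'I_14 -> R :=
  fun e => (e \in M)%:R.

Definition in_conv_hull (R : realFieldType) (T : finType) (n : nat)
    (S : pred T) (f : T -> 'I_n -> R) (y : 'I_n -> R) : Prop :=
  exists lam : T -> R,
    [/\ forall t, 0 <= lam t,
        forall t, ~~ S t -> lam t = 0,
        \sum_t lam t = 1
      & forall e, y e = \sum_t lam t * f t e].

Definition in_PGR (R : realFieldType) (y : 'I_14 -> R) : Prop :=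
  in_conv_hull odd_pm (@chi R) y.

Definition yvec (R : realFieldType) : 'I_14 -> R :=
  fun e => if val e == 0%N then 2 / 3 else 1 / 3.

(* Main.v *)
Require Import Defs.
From mathcomp Require Import all_boot all_order all_algebra zify.

Definition G (M : {set 'I_14}) (P : nat -> bool) (i : nat) : nat :=
  ((inord i : 'I_14) \in M) && P i.

Lemma card_sum (M : {set 'I_14}) (P : nat -> bool) :
  #|[set e in M | P (val e)]| = \sum_(0 <= i < 14) G M P i.
Proof.
rewrite big_mkord -sum1_card big_mkcond /=; apply: eq_bigr => i _; rewrite inE /G inord_val.
by case: (_ && _).
Qed.

Lemma card_inc (M : {set 'I_14}) (v : 'I_10) :
  #|[set e in M | incident v e]| = \sum_(0 <= i < 14) G M (fun i => (v.+1 == (nth (0,0) edge_list i).1) || (v.+1 == (nth (0,0) edge_list i).2)) i.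
Proof. exact: card_sum. Qed.

Lemma key (M : {set 'I_14}) : odd_pm M -> (inord 4 : 'I_14) \notin M.
Proof.
case/andP => /forallP pm.
have ->: M :&: Rset = [set e in M | (nth (0,0) edge_list (val e)) \in [:: (2,7); (4,9); (5,10)]] by apply/setP => e; rewrite !inE.
rewrite (card_sum M (fun i => nth (0,0) edge_list i \in [:: (2,7); (4,9); (5,10)])).
rewrite /G /index_iota /= !big_cons big_nil /= ?andbT ?andbF.
have h0 := pm (Ordinal (isT : 0 < 10)). have h1 := pm (Ordinal (isT : 1 < 10)).
have h2 := pm (Ordinal (isT : 2 < 10)). have h3 := pm (Ordinal (isT : 3 < 10)).
have h4 := pm (Ordinal (isT : 4 < 10)). have h5 := pm (Ordinal (isT : 5 < 10)).
have h6 := pm (Ordinal (isT : 6 < 10)). have h7 := pm (Ordinal (isT : 7 < 10)).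
have h8 := pm (Ordinal (isT : 8 < 10)). have h9 := pm (Ordinal (isT : 9 < 10)).
move: h0 h1 h2 h3 h4 h5 h6 h7 h8 h9; rewrite !card_inc.
rewrite /G /index_iota /= !big_cons !big_nil /= ?andbT ?andbF.
move: (inord 0 \in M) (inord 1 \in M) (inord 2 \in M) (inord 3 \in M) (inord 4 \in M) (inord 5 \in M) (inord 6 \in M) (inord 7 \in M) (inord 8 \in M) (inord 9 \in M) (inord 10 \in M) (inord 11 \in M) (inord 12 \in M) (inord 13 \in M) => b0 b1 b2 b3 b4 b5 b6 b7 b8 b9 b10 b11 b12 b13.
move=> h0 h1 h2 h3 h4 h5 h6 h7 h8 h9 ho; apply/negP => b4t; move: h0 h1 h2 h3 h4 h5 h6 h7 h8 h9 ho; rewrite b4t.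
case: b0 => //=; case: b1 => //=; case: b2 => //=; case: b3 => //=; case: b5 => //=; case: b6 => //=; case: b7 => //=; case: b8 => //=; case: b11 => //=; case: b9 => //=; case: b10 => //=; case: b12 => //=; case: b13 => //=; by [].
Qed.

Theorem lemma18 (R : realFieldType) : ~ in_PGR (yvec R).
Proof.
case=> lam [_ hS _ hy].
have := hy (inord 4).
rewrite big1 => [|t _]; last first.
  case ht: (odd_pm t); last by rewrite hS ?ht // GRing.mul0r.
  by rewrite /chi (negbTE (key _ ht)) GRing.mulr0.
rewrite /yvec (_ : val (inord 4 : 'I_14) = 4%N); last exact: inordK.
move=> /= /eqP.
by rewrite GRing.mul1r GRing.invr_eq0 Num.Theory.pnatr_eq0.
Qed.
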